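(* Let $L$ be a Lie algebra over a field $F$ and $\tilde L=L\otimes_FE$. Let $\Omega\subset\tilde L$ be a finite family of elements such that the family $\operatorname{ad}(\Omega)=\{\operatorname{ad}(b)\}_{b\in\Omega}$ satisfies (U1) and (U2), and suppose $U_2(\operatorname{ad}(\Omega))=0$. Then $a=\sum_{b\in\Omega}b$ is a sandwich of the Lie algebra $\tilde L$.
   Context: $E$ is the commutative associative $F$-algebra without unit generated by $e_1,e_2,\dots$ with relations $e_i^2=0$; its basis consists of $e_\pi=e_{i_1}\cdots e_{i_r}$ for nonempty finite $\pi=\{i_1<\dots<i_r\}$. $\tilde L=L\otimes_FE$ with $[x\otimes\alpha,y\otimes\beta]=[x,y]\otimes\alpha\beta$. For $D=\operatorname{Der}(L)$, $\tilde D=D\otimes_FE$ acts by derivations on $\tilde L$, and $\tilde D_i=\sum_{\pi\ni i}D\otimes e_\pi$. For $b\in\tilde L$, $\operatorname{ad}(b):x\mapsto[x,b]$ is viewed as an element of $\tilde D$. A finite family $\Omega$ of elements of $\tilde D$ satisfies (U1) if each element lies in some $\tilde D_i$, and (U2) if any two of its elements commute. For such $\Omega$, $U_k(\Omega)=\sum d_1\cdots d_k$, summed over all $k$-element subsets $\{d_1,\dots,d_k\}$ of $\Omega$; $U_0(\Omega)=\mathrm{Id}$. An element $a$ of a Lie algebra $M$ is a sandwich if $\operatorname{ad}(a)^2=0$ and $\operatorname{ad}(a)\operatorname{ad}(c)\operatorname{ad}(a)=0$ for all $c\in M$. *)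

(* Defs.v *)
From HB Require Import structures.
From mathcomp Require Import all_boot all_order all_algebra.
From mathcomp Require Import finmap.
Set Implicit Arguments. Unset Strict Implicit. Unset Printing Implicit Defensive.
Import Order.TTheory GRing.Theory Num.Theory.
Local Open Scope ring_scope.


Definition lie_bracket (F : fieldType) (L : lmodType F) (br : L -> L -> L) : Prop :=
  [/\ (forall (c : F) (x y z : L), br (c *: x + y) z = c *: br x z + br y z),
      (forall (c : F) (x y z : L), br x (c *: y + z) = c *: br x y + br x z),
      (forall x : L, br x x = 0) &
      (forall x y z : L, br x (br y z) + br y (br z x) + br z (br x y) = 0)].

(* L~ = L (x)_F E.  E has basis e_pi, pi a nonempty finite subset of nat,
   with e_pi e_sigma = e_(pi u sigma) if pi, sigma disjoint and 0 otherwise.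
   An element  sum_pi x_pi (x) e_pi  is represented by its coefficient
   function pi |-> x_pi; genuine elements of L~ are those with x_emptyset = 0
   and finite support (predicate [in_Lt]). *)
Definition Lt (F : fieldType) (L : lmodType F) := {fset nat} -> L.

Definition in_Lt (F : fieldType) (L : lmodType F) (x : Lt L) : Prop :=
  x fset0 = 0 /\
  exists S : {fset {fset nat}}, forall pi : {fset nat}, pi \notin S -> x pi = 0.

(* sum over all decompositions rho = pi (disjoint union) sigma with
   pi, sigma nonempty: this is the coefficient of e_rho in a product. *)
Definition part_sum (F : fieldType) (L : lmodType F) (rho : {fset nat})
  (f : {fset nat} -> {fset nat} -> L) : L :=
  \sum_(pi <- fpowerset rho | (pi != fset0) && ((rho `\` pi)%fset != fset0))
     f pi (rho `\` pi)%fset.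

(* Bracket of L~ : [x (x) a, y (x) b] = [x,y] (x) ab. *)
Definition brt (F : fieldType) (L : lmodType F) (br : L -> L -> L)
  (x y : Lt L) : Lt L :=
  fun rho => part_sum rho (fun pi sigma => br (x pi) (y sigma)).

Definition adt (F : fieldType) (L : lmodType F) (br : L -> L -> L)
  (b : Lt L) : Lt L -> Lt L := fun x => brt br x b.

(* Elements of D~ = Der(L) (x) E (more generally End(L) (x) E), given by
   coefficient functions pi |-> d_pi, acting on L~ by
   (d (x) a)(x (x) b) = d(x) (x) ab. *)
Definition Dt (F : fieldType) (L : lmodType F) := {fset nat} -> L -> L.

Definition actD (F : fieldType) (L : lmodType F) (d : Dt L) (x : Lt L) : Lt L :=
  fun rho => part_sum rho (fun pi sigma => d pi (x sigma)).

(* ad(b) viewed as an element of D~: if b = sum_pi b_pi (x) e_pi then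
   ad(b) = sum_pi ad(b_pi) (x) e_pi. *)
Definition adD (F : fieldType) (L : lmodType F) (br : L -> L -> L)
  (b : Lt L) : Dt L := fun pi y => br y (b pi).

Definition in_Dti (F : fieldType) (L : lmodType F) (i : nat) (d : Dt L) : Prop :=
  forall pi : {fset nat}, i \notin pi -> forall y : L, d pi y = 0.

Definition U1 (F : fieldType) (L : lmodType F) (Om : seq (Dt L)) : Prop :=
  forall k, (k < size Om)%N -> exists i : nat, in_Dti i (nth (fun _ _ => 0) Om k).

Definition U2 (F : fieldType) (L : lmodType F) (Om : seq (Dt L)) : Prop :=
  forall k l, (k < size Om)%N -> (l < size Om)%N ->
  forall x : Lt L, in_Lt x ->
    actD (nth (fun _ _ => 0) Om k) (actD (nth (fun _ _ => 0) Om l) x)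
    = actD (nth (fun _ _ => 0) Om l) (actD (nth (fun _ _ => 0) Om k) x).

Definition U2op (F : fieldType) (L : lmodType F) (Om : seq (Dt L)) (x : Lt L)
  : Lt L :=
  fun rho => \sum_(k < size Om) \sum_(l < size Om | (k < l)%N)
     actD (nth (fun _ _ => 0) Om k) (actD (nth (fun _ _ => 0) Om l) x) rho.

Definition sumLt (F : fieldType) (L : lmodType F) (Om : seq (Lt L)) : Lt L :=
  fun pi => \sum_(b <- Om) b pi.

Definition sandwich (F : fieldType) (L : lmodType F) (br : L -> L -> L)
  (a : Lt L) : Prop :=
  (forall x : Lt L, in_Lt x -> adt br a (adt br a x) = (fun _ => 0)) /\
  (forall c : Lt L, in_Lt c -> forall x : Lt L, in_Lt x ->
     adt br a (adt br c (adt br a x)) = (fun _ => 0)).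

(* Main.v *)
Require Import Defs.
From HB Require Import structures.
From mathcomp Require Import all_boot all_order all_algebra.
From mathcomp Require Import finmap.
From Stdlib Require Import FunctionalExtensionality.
Set Implicit Arguments. Unset Strict Implicit. Unset Printing Implicit Defensive.
Import Order.TTheory GRing.Theory Num.Theory.
Local Open Scope ring_scope.


Section S.
Variables (F : fieldType) (L : lmodType F) (br : L -> L -> L).
Hypothesis HL : lie_bracket br.

Lemma brDl x y z : br (x + y) z = br x z + br y z.
Proof. by move: HL; rewrite /lie_bracket => -[h _ _ _]; rewrite -[x]scale1r h !scale1r. Qed.
Lemma brDr x y z : br z (x + y) = br z x + br z y.
Proof. by move: HL; rewrite /lie_bracket => -[_ h _ _]; rewrite -[x]scale1r h !scale1r. Qed.
Lemma br0l z : br 0 z = 0.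
Proof. by apply: (addrI (br 0 z)); rewrite addr0 -brDl addr0. Qed.
Lemma br0r z : br z 0 = 0.
Proof. by apply: (addrI (br z 0)); rewrite addr0 -brDr addr0. Qed.
Lemma brNl x y : br (- x) y = - br x y.
Proof. by apply/eqP; rewrite -addr_eq0 -brDl addNr br0l. Qed.
Lemma brNr x y : br y (- x) = - br y x.
Proof. by apply/eqP; rewrite -addr_eq0 -brDr addNr br0r. Qed.
Lemma br_anti x y : br x y = - br y x.
Proof.
move: HL; rewrite /lie_bracket => -[_ _ h _]; apply/eqP; rewrite -addr_eq0.
have := h (x + y); rewrite brDl !brDr !h add0r addr0 => ->; done.
Qed.
Lemma br_jac y z b : br (br y z) b = br (br y b) z + br y (br z b).
Proof.
move: HL; rewrite /lie_bracket => -[_ _ _ J].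
have := J y z b; rewrite (br_anti (br y z)) (br_anti (br y b) z) (br_anti b y) brNr.
by move/eqP; rewrite addrC addr_eq0 => /eqP ->; rewrite opprK addrC.
Qed.
Lemma br_suml I (r : seq I) (P : pred I) f z :
  br (\sum_(i <- r | P i) f i) z = \sum_(i <- r | P i) br (f i) z.
Proof. exact: (big_morph (fun x => br x z) (fun x y => brDl x y z) (br0l z)). Qed.
Lemma br_sumr I (r : seq I) (P : pred I) f z :
  br z (\sum_(i <- r | P i) f i) = \sum_(i <- r | P i) br z (f i).
Proof. exact: (big_morph (fun x => br z x) (fun x y => brDr x y z) (br0r z)). Qed.
End S.

Section FS.
Implicit Types A B C R : {fset nat}.
Lemma subM A B e : (A `<=` B)%fset -> (e \in A) ==> (e \in B).
Proof. by move=> /fsubsetP s; apply/implyP; apply: s. Qed.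
Lemma disM A B e : (A `&` B == fset0)%fset -> ~~ ((e \in A) && (e \in B)).
Proof. by move/eqP/fsetP/(_ e); rewrite !inE => ->. Qed.
Lemma ne0_sub A B : (A `<=` B)%fset -> A != fset0 -> B != fset0.
Proof. move=> s /fset0Pn [e h]; apply/fset0Pn; exists e; exact: (fsubsetP s e h). Qed.

Lemma F1 A R : (A `<=` R)%fset -> (R `\` (R `\` A))%fset = A.
Proof.
move=> H; apply/fsetP => e; move: (subM e H); rewrite !inE.
by case: (e \in A); case: (e \in R).
Qed.
Lemma F2 A P : (A `<=` P)%fset -> (A `|` (P `\` A))%fset = P.
Proof.
move=> H; apply/fsetP => e; move: (subM e H); rewrite !inE.
by case: (e \in A); case: (e \in P).
Qed.
Lemma F3 A B : (A `&` B == fset0)%fset -> ((A `|` B) `\` A)%fset = B.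
Proof.
move=> H; apply/fsetP => e; move: (disM e H); rewrite !inE.
by case: (e \in A); case: (e \in B).
Qed.
Lemma F4 A P : (A `&` (P `\` A) == fset0)%fset.
Proof. by apply/eqP/fsetP => e; rewrite !inE; case: (e \in A); case: (e \in P). Qed.
Lemma F5 A B R : (A `<=` R)%fset -> (B `<=` R)%fset -> (A `&` B == fset0)%fset ->
  (R `\` (A `|` (R `\` (A `|` B))))%fset = B.
Proof.
move=> H1 H2 H3; apply/fsetP => e; move: (subM e H1) (subM e H2) (disM e H3); rewrite !inE.
by case: (e \in A); case: (e \in B); case: (e \in R).
Qed.
Lemma F6 A B R : (A `&` (R `\` (A `|` B)) == fset0)%fset.
Proof. by apply/eqP/fsetP => e; rewrite !inE; case: (e \in A); case: (e \in B); case: (e \in R). Qed.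
Lemma F7 A B R : (B `<=` R `\` A)%fset -> (A `&` B == fset0)%fset.
Proof.
move=> H; apply/eqP/fsetP => e; move: (subM e H); rewrite !inE.
by case: (e \in A); case: (e \in B); case: (e \in R).
Qed.
Lemma F8 A B R : (B `<=` R)%fset -> (A `&` B == fset0)%fset -> (B `<=` R `\` A)%fset.
Proof.
move=> H1 H2; apply/fsubsetP => e; move: (subM e H1) (disM e H2); rewrite !inE.
by case: (e \in A); case: (e \in B); case: (e \in R).
Qed.
End FS.

Lemma sum_bij (I J : eqType) (V : zmodType) (s : seq I) (t : seq J)
  (P : pred I) (Q : pred J) (h : I -> J) (Fx : I -> V) (G : J -> V) :
  uniq s -> uniq t ->
  (forall x, x \in s -> P x -> Fx x = G (h x)) ->
  (forall x1 x2, x1 \in s -> P x1 -> x2 \in s -> P x2 -> h x1 = h x2 -> x1 = x2) ->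
  (forall x, x \in s -> P x -> (h x \in t) && Q (h x)) ->
  (forall y, y \in t -> Q y -> exists2 x, (x \in s) && P x & y = h x) ->
  \sum_(x <- s | P x) Fx x = \sum_(y <- t | Q y) G y.
Proof.
move=> us ut FG hinj f g.
rewrite big_seq_cond (eq_bigr (fun x => G (h x))); last first.
  by move=> x /andP[xs Px]; apply: FG.
rewrite -big_seq_cond -big_filter -[RHS]big_filter -(big_map h predT G).
apply: perm_big; apply: uniq_perm.
- rewrite map_inj_in_uniq ?filter_uniq // => x1 x2.
  rewrite !mem_filter => /andP[? ?] /andP[? ?]; exact: hinj.
- exact: filter_uniq.
- move=> y; rewrite mem_filter; apply/mapP/andP => [[x]|[qy yt]].
    by rewrite mem_filter => /andP[px xs] ->; have /andP[-> ->] := f x xs px.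
  have [x /andP[xs px] ->] := g y yt qy.
  by exists x => //; rewrite mem_filter px.
Qed.

Lemma pair_sum (I J : eqType) (V : zmodType) (s : seq I) (t : I -> seq J)
  (A : pred I) (B : I -> pred J) (G : I -> J -> V) :
  \sum_(x <- s | A x) \sum_(y <- t x | B x y) G x y =
  \sum_(p <- [seq (x, y) | x <- s, y <- t x] | A p.1 && B p.1 p.2) G p.1 p.2.
Proof.
rewrite [RHS]big_mkcond big_allpairs_dep /= big_mkcond /=.
apply: eq_bigr => x _; case: (A x) => /=; first by rewrite big_mkcond.
by rewrite big1.
Qed.

Lemma pair_uniq (I J : eqType) (s : seq I) (t : I -> seq J) :
  uniq s -> (forall x, uniq (t x)) -> uniq [seq (x, y) | x <- s, y <- t x].
Proof.
elim: s => //= x s IH /andP[xs us] ut; rewrite cat_uniq IH // andbT.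
rewrite map_inj_uniq ?ut //=; last by move=> ? ? [].
apply/hasPn => p /allpairsPdep [x' [y' [x's _ ->]]].
apply/mapP => -[y _ [ex _]]; by move: xs; rewrite -ex x's.
Qed.

Lemma mem_pair (I J : eqType) (s : seq I) (t : I -> seq J) x y :
  ((x, y) \in [seq (x, y) | x <- s, y <- t x]) = (x \in s) && (y \in t x).
Proof.
apply/allpairsPdep/andP => [[x' [y' [? ? [-> ->]]]] | [? ?]]; first by split.
by exists x, y.
Qed.

Section PS.
Variables (F : fieldType) (L : lmodType F).

Lemma ps_uniq (rho : {fset nat}) : uniq (fpowerset rho). Proof. exact: fset_uniq. Qed.

Lemma part_sum_swap rho (f : {fset nat} -> {fset nat} -> L) :
  part_sum rho (fun p s => f s p) = part_sum rho f.
Proof.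
rewrite /part_sum.
apply: (sum_bij (h := fun pi => (rho `\` pi)%fset)) (ps_uniq _) (ps_uniq _) _ _ _ _.
- by move=> pi; rewrite fpowersetE => s _; rewrite F1.
- move=> p1 p2; rewrite !fpowersetE => s1 _ s2 _ e.
  by rewrite -(F1 s1) e F1.
- move=> pi; rewrite fpowersetE => s /andP[n1 n2].
  by rewrite fpowersetE fsubsetDl F1 // n1 n2.
- move=> y; rewrite fpowersetE => s /andP[n1 n2].
  exists (rho `\` y)%fset; last by rewrite F1.
  by rewrite fpowersetE fsubsetDl F1 // n1 n2.
Qed.

Definition tcond (rho : {fset nat}) (p : {fset nat} * {fset nat}) :=
  [&& p.1 != fset0, p.2 != fset0, (p.1 `&` p.2 == fset0)%fset &
      (rho `\` (p.1 `|` p.2))%fset != fset0].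

Definition trip (rho : {fset nat}) (g : {fset nat} -> {fset nat} -> {fset nat} -> L) : L :=
  \sum_(p <- [seq (a, b) | a <- fpowerset rho, b <- fpowerset rho] | tcond rho p)
     g p.1 p.2 (rho `\` (p.1 `|` p.2))%fset.

Lemma trip_uniq (rho : {fset nat}) : uniq [seq (a, b) | a <- fpowerset rho, b <- fpowerset rho].
Proof. by apply: pair_uniq => [|x]; apply: ps_uniq. Qed.

Lemma trip1 rho g :
  part_sum rho (fun pi sg => part_sum pi (fun a b => g a b sg)) = trip rho g.
Proof.
rewrite /part_sum pair_sum /trip.
apply: (sum_bij (h := fun p => (p.2, p.1 `\` p.2)%fset)).
- by apply: pair_uniq => [|x]; apply: ps_uniq.
- exact: trip_uniq.
- move=> [pi a]; rewrite mem_pair !fpowersetE /= => /andP[s1 s2] _.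
  by rewrite F2.
- move=> [p1 a1] [p2 a2]; rewrite !mem_pair !fpowersetE /=.
  move=> /andP[_ s1] _ /andP[_ s2] _ [e1 e2].
  by rewrite -(F2 s1) -(F2 s2) e2 e1.
- move=> [pi a]; rewrite mem_pair !fpowersetE /= => /andP[s1 s2] /andP[/andP[n1 n2] /andP[n3 n4]].
  rewrite mem_pair !fpowersetE /tcond /= F2 // n2 n3 n4 F4 andbT.
  by rewrite (fsubset_trans s2 s1) (fsubset_trans (fsubsetDl _ _) s1).
- move=> [a b]; rewrite mem_pair !fpowersetE /tcond /= => /andP[s1 s2] /and4P[n1 n2 d n3].
  exists (a `|` b, a)%fset; last by rewrite /= F3.
  rewrite mem_pair !fpowersetE /= fsubUset s1 s2 fsubsetUl F3 // n1 n2 n3 /=.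
  by rewrite !andbT; apply: (ne0_sub (fsubsetUl a b)).
Qed.

Lemma trip2 rho g :
  part_sum rho (fun pi sg => part_sum sg (fun b c => g pi b c)) = trip rho g.
Proof.
rewrite /part_sum pair_sum /trip.
apply: (sum_bij (h := id)).
- by apply: pair_uniq => [|x]; apply: ps_uniq.
- exact: trip_uniq.
- by move=> [pi b] _ _ /=; rewrite fsetDDl.
- by [].
- move=> [pi b]; rewrite mem_pair !fpowersetE /= => /andP[s1 s2] /andP[/andP[n1 n2] /andP[n3 n4]].
  rewrite mem_pair !fpowersetE /tcond /= -fsetDDl n1 n3 n4 (F7 s2) s1 /=.
  by rewrite andbT; exact: (fsubset_trans s2 (fsubsetDl _ _)).
- move=> [a b]; rewrite mem_pair !fpowersetE /tcond /= => /andP[s1 s2] /and4P[n1 n2 d n3].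
  exists (a, b) => //.
  rewrite mem_pair !fpowersetE /= s1 (F8 s2 d) fsetDDl n1 n2 n3 /=.
  by rewrite andbT; apply: (ne0_sub _ n3); rewrite -fsetDDl fsubsetDl.
Qed.

Lemma trip_swap rho g : trip rho (fun a b c => g a c b) = trip rho g.
Proof.
rewrite /trip.
have key : forall p, p \in [seq (a, b) | a <- fpowerset rho, b <- fpowerset rho] ->
   tcond rho p ->
   ((p.1, rho `\` (p.1 `|` p.2))%fset \in [seq (a, b) | a <- fpowerset rho, b <- fpowerset rho])
   && tcond rho (p.1, rho `\` (p.1 `|` p.2))%fset
   /\ (rho `\` (p.1 `|` (rho `\` (p.1 `|` p.2))))%fset = p.2.
  move=> [a b]; rewrite mem_pair !fpowersetE /tcond /= => /andP[s1 s2] /and4P[n1 n2 d n3].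
  have e := F5 s1 s2 d; split => //.
  by rewrite mem_pair !fpowersetE s1 fsubsetDl n1 n3 F6 e n2.
apply: (sum_bij (h := fun p => (p.1, rho `\` (p.1 `|` p.2))%fset)).
- exact: trip_uniq.
- exact: trip_uniq.
- by move=> p ps pc /=; have [_ ->] := key p ps pc.
- move=> [a1 b1] [a2 b2] ps1 pc1 ps2 pc2 /= [e1 e2].
  have [_ f1] := key _ ps1 pc1; have [_ f2] := key _ ps2 pc2.
  by move: f1 f2; rewrite /= e2 e1 => -> ->.
- by move=> p ps pc; have [] := key p ps pc.
- move=> y ys yc; have [/andP[h1 h2] f] := key y ys yc.
  exists (y.1, rho `\` (y.1 `|` y.2))%fset; first by rewrite h1 h2.
  by rewrite /= f; case: y {ys yc h1 h2 f}.
Qed.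

Lemma trip_add rho g1 g2 :
  trip rho (fun a b c => g1 a b c + g2 a b c) = trip rho g1 + trip rho g2.
Proof. by rewrite /trip big_split. Qed.
End PS.

Section G.
Variables (F : fieldType) (L : lmodType F) (br : L -> L -> L).
Hypothesis HL : lie_bracket br.

Lemma eq_ps rho (f g : {fset nat} -> {fset nat} -> L) :
  (forall p s, f p s = g p s) -> part_sum rho f = part_sum rho g.
Proof. by move=> h; rewrite /part_sum; apply: eq_bigr => p _; apply: h. Qed.

Lemma eq_trip rho (f g : {fset nat} -> {fset nat} -> {fset nat} -> L) :
  (forall a b c, f a b c = g a b c) -> trip rho f = trip rho g.
Proof. by move=> h; rewrite /trip; apply: eq_bigr => p _; apply: h. Qed.

Lemma ps_brl pi f w : br (part_sum pi f) w = part_sum pi (fun a c => br (f a c) w).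
Proof. by rewrite /part_sum (br_suml HL). Qed.
Lemma ps_brr pi f w : br w (part_sum pi f) = part_sum pi (fun a c => br w (f a c)).
Proof. by rewrite /part_sum (br_sumr HL). Qed.

Lemma brt_jac (y z b : Lt L) rho :
  brt br (brt br y z) b rho = brt br (brt br y b) z rho + brt br y (brt br z b) rho.
Proof.
rewrite /brt.
rewrite (eq_ps _ (fun pi sg => ps_brl pi _ _)) trip1.
rewrite (eq_ps _ (fun pi sg => ps_brl pi _ _)) trip1.
rewrite (eq_ps _ (fun pi sg => ps_brr sg _ _)) trip2.
set g := (fun a c d => br (br (y a) (b c)) (z d)).
rewrite -(trip_swap rho g) -trip_add; apply: eq_trip => a c d.
by rewrite /g (br_jac HL).
Qed.

Lemma brt_suml I (r : seq I) (P : pred I) (f : I -> Lt L) (y : Lt L) rho :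
  brt br (fun pi => \sum_(i <- r | P i) f i pi) y rho =
  \sum_(i <- r | P i) brt br (f i) y rho.
Proof.
rewrite /brt /part_sum; under eq_bigr do rewrite (br_suml HL).
by rewrite exchange_big.
Qed.
Lemma brt_sumr I (r : seq I) (P : pred I) (f : I -> Lt L) (y : Lt L) rho :
  brt br y (fun pi => \sum_(i <- r | P i) f i pi) rho =
  \sum_(i <- r | P i) brt br y (f i) rho.
Proof.
rewrite /brt /part_sum; under eq_bigr do rewrite (br_sumr HL).
by rewrite exchange_big.
Qed.
Lemma brt_addl (u v y : Lt L) rho :
  brt br (fun pi => u pi + v pi) y rho = brt br u y rho + brt br v y rho.
Proof.
rewrite /brt /part_sum -big_split; apply: eq_bigr => p _; exact: (brDl HL).
Qed.
Lemma brt_addr (u v y : Lt L) rho :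
  brt br y (fun pi => u pi + v pi) rho = brt br y u rho + brt br y v rho.
Proof.
rewrite /brt /part_sum -big_split; apply: eq_bigr => p _; exact: (brDr HL).
Qed.
Lemma brt0l (y : Lt L) rho : brt br (fun _ => 0) y rho = 0.
Proof. by rewrite /brt /part_sum big1 // => p _; apply: (br0l HL). Qed.
Lemma brt0r (y : Lt L) rho : brt br y (fun _ => 0) rho = 0.
Proof. by rewrite /brt /part_sum big1 // => p _; apply: (br0r HL). Qed.

Lemma actD_adD (b x : Lt L) : actD (adD br b) x = brt br x b.
Proof.
apply: functional_extensionality => rho.
rewrite /actD /adD /brt.
exact: (part_sum_swap rho (fun p s => br (x p) (b s))).
Qed.

Lemma notin_D i (pi p : {fset nat}) : i \notin pi -> i \notin (pi `\` p)%fset.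
Proof. by move=> h; rewrite !inE (negbTE h) andbF. Qed.

Lemma brt_zero i (b x : Lt L) pi : in_Dti i (adD br b) -> i \notin pi ->
  brt br x b pi = 0.
Proof.
move=> H h; rewrite /brt /part_sum big1 // => p _.
exact: (H _ (notin_D p h)).
Qed.

Lemma in_D_notin i (rho p : {fset nat}) : i \in (rho `\` p)%fset -> i \notin p.
Proof. by rewrite inE => /andP[]. Qed.

Lemma sq0 i (b x : Lt L) rho : in_Dti i (adD br b) ->
  brt br (brt br x b) b rho = 0.
Proof.
move=> H; rewrite {1}/brt /part_sum big1 // => p _.
case: (boolP (i \in (rho `\` p)%fset)) => h.
  by rewrite (brt_zero x H (in_D_notin h)) (br0l HL).
exact: (H _ h).
Qed.

Lemma cross0 i (b x y : Lt L) rho : in_Dti i (adD br b) ->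
  brt br (brt br x b) (brt br y b) rho = 0.
Proof.
move=> H; rewrite {1}/brt /part_sum big1 // => p _.
case: (boolP (i \in (rho `\` p)%fset)) => h.
  by rewrite (brt_zero x H (in_D_notin h)) (br0l HL).
by rewrite (brt_zero y H h) (br0r HL).
Qed.

Lemma in_Lt_brt (x y : Lt L) : in_Lt x -> in_Lt y -> in_Lt (brt br x y).
Proof.
move=> [x0 [Sx hx]] [y0 [Sy hy]]; split.
  rewrite /brt /part_sum big_seq_cond big1 // => p /andP[].
  by rewrite fpowersetE fsubset0 => /eqP -> /andP[/eqP].
exists [fset (a `|` b)%fset | a in Sx, b in Sy]%fset => rho hrho.
rewrite /brt /part_sum big_seq_cond big1 // => p /andP[].
rewrite fpowersetE => s _.
case: (boolP (p \in Sx)) => h1; last by rewrite hx // (br0l HL).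
case: (boolP ((rho `\` p)%fset \in Sy)) => h2; last by rewrite hy // (br0r HL).
move: hrho; rewrite -(F2 s) => /negP; case; apply/imfset2P; exists p => //; by exists (rho `\` p)%fset.
Qed.
End G.

Lemma symsum n (V : zmodType) (M : 'I_n -> 'I_n -> V) : (forall k, M k k = 0) ->
  \sum_(k : 'I_n) \sum_(l : 'I_n) M k l = \sum_(k : 'I_n) \sum_(l : 'I_n | (k < l)%N) (M k l + M l k).
Proof.
move=> M0.
have E (k : 'I_n) : \sum_(l : 'I_n) M k l = \sum_(l : 'I_n | (k < l)%N) M k l + \sum_(l : 'I_n | (l < k)%N) M k l.
  rewrite (bigID (fun l : 'I_n => (k < l)%N)) /=; congr (_ + _).
  rewrite (bigD1 k) /= ?ltnn // M0 add0r; apply: eq_bigl => l.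
  by case: (ltngtP l k) => [h|h|/val_inj ->]; rewrite ?eqxx ?andbF // -?(inj_eq val_inj) /= ?(ltn_eqF h) ?(gtn_eqF h) ?h.
rewrite (eq_bigr _ (fun k _ => E k)) big_split /=.
rewrite [X in _ + X](exchange_big_dep xpredT) //=.
by rewrite -big_split /=; apply: eq_bigr => k _; rewrite big_split.
Qed.

Lemma sum2_split n (V : zmodType) (f g : 'I_n -> 'I_n -> V) :
  \sum_(k : 'I_n) \sum_(l : 'I_n | (k < l)%N) (f k l + g k l) =
  \sum_(k : 'I_n) \sum_(l : 'I_n | (k < l)%N) f k l + \sum_(k : 'I_n) \sum_(l : 'I_n | (k < l)%N) g k l.
Proof. by rewrite -big_split; apply: eq_bigr => k _; rewrite big_split. Qed.
Unset Implicit Arguments.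
Theorem lemma12 (F : fieldType) (L : lmodType F) (br : L -> L -> L)
  (HL : lie_bracket br) (Om : seq (Lt L)) :
  (forall k, (k < size Om)%N -> in_Lt (nth (fun _ => 0) Om k)) ->
  U1 [seq adD br b | b <- Om] ->
  U2 [seq adD br b | b <- Om] ->
  (forall x : Lt L, in_Lt x -> U2op [seq adD br b | b <- Om] x = (fun _ => 0)) ->
  sandwich br (sumLt Om).
Proof.
move=> Hin HU1 HU2 HUop.
set n := size Om.
pose b k := nth (fun _ : {fset nat} => 0 : L) Om k.
have nthE : forall k, (k < n)%N -> nth (fun _ _ => 0) [seq adD br b | b <- Om] k = adD br (b k).
  by move=> k hk; rewrite (nth_map (fun _ => 0)).
have U1' : forall k, (k < n)%N -> exists i, in_Dti i (adD br (b k)).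
  by move=> k hk; rewrite -nthE //; apply: HU1; rewrite size_map.
have U2' : forall k l, (k < n)%N -> (l < n)%N -> forall x, in_Lt x ->
    brt br (brt br x (b l)) (b k) = brt br (brt br x (b k)) (b l).
  move=> k l hk hl x hx; have := HU2 k l; rewrite size_map => /(_ hk hl x hx).
  by rewrite !nthE // !actD_adD.
have Uop' : forall x, in_Lt x -> forall rho,
    \sum_(k < n) \sum_(l < n | (k < l)%N) brt br (brt br x (b l)) (b k) rho = 0.
  move=> x hx rho; have := congr1 (fun f => f rho) (HUop x hx); rewrite /U2op /=.
  rewrite size_map => H; apply: etrans _ H; apply: eq_bigr => k _; apply: eq_bigr => l _.
  by rewrite !nthE // !actD_adD.

have sumE : sumLt Om = fun pi => \sum_(k < n) b k pi.
  apply: functional_extensionality => pi.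
  by rewrite /sumLt (big_nth (fun _ => 0)) big_mkord.
have DE : forall y, brt br y (sumLt Om) = fun rho => \sum_(k < n) brt br y (b k) rho.
  move=> y; apply: functional_extensionality => rho.
  by rewrite sumE (brt_sumr HL).
have DD : forall x, in_Lt x -> brt br (brt br x (sumLt Om)) (sumLt Om) = fun _ => 0.
  move=> x hx; apply: functional_extensionality => rho.
  rewrite DE DE /=.
  under eq_bigr do rewrite (brt_suml HL).
  rewrite symsum; last first.
    move=> k; have [i hi] := U1' k (ltn_ord k); exact: (sq0 HL _ _ hi).
  under eq_bigr => k _ do under eq_bigr => l hkl do
    rewrite -(U2' k l (ltn_ord k) (ltn_ord l) x hx).
  by rewrite sum2_split Uop' // addr0.
split.
  by move=> x hx; rewrite /adt; apply: DD.
move=> c hc x hx; rewrite /adt; apply: functional_extensionality => rho.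
rewrite (brt_jac HL) (DD x hx) (brt0l HL) add0r.
rewrite DE DE (brt_suml HL).
under eq_bigr do rewrite (brt_sumr HL).
rewrite symsum; last first.
  move=> k; have [i hi] := U1' k (ltn_ord k); exact: (cross0 HL _ _ _ hi).
have J1 : forall y z w, brt br (brt br y z) w =
    fun pi => brt br (brt br y w) z pi + brt br y (brt br z w) pi.
  by move=> y z w; apply: functional_extensionality => pi; rewrite (brt_jac HL).
have := Uop' _ (in_Lt_brt HL hx hc) rho.
under eq_bigr => k _ do under eq_bigr => l _ do
  rewrite (J1 x c (b l)) (brt_addl HL) (brt_jac HL (brt br x (b l)) c (b k))
    (brt_jac HL x (brt br c (b l)) (b k)) -addrA.
move=> H; rewrite sum2_split in H.
have eA : \sum_(k < n) \sum_(l < n | (k < l)%N)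
    brt br (brt br (brt br x (b l)) (b k)) c rho = 0.
  transitivity (brt br (fun pi => \sum_(k < n) \sum_(l < n | (k < l)%N)
      brt br (brt br x (b l)) (b k) pi) c rho).
    rewrite (brt_suml HL); apply: eq_bigr => k _; by rewrite (brt_suml HL).
  have -> : (fun pi => \sum_(k < n) \sum_(l < n | (k < l)%N)
      brt br (brt br x (b l)) (b k) pi) = fun _ => 0.
    by apply: functional_extensionality => pi; apply: Uop'.
  exact: (brt0l HL).
rewrite eA add0r sum2_split in H.
have eD : \sum_(k < n) \sum_(l < n | (k < l)%N)
    brt br x (brt br (brt br c (b l)) (b k)) rho = 0.
  transitivity (brt br x (fun pi => \sum_(k < n) \sum_(l < n | (k < l)%N)
      brt br (brt br c (b l)) (b k) pi) rho).
    rewrite (brt_sumr HL); apply: eq_bigr => k _; by rewrite (brt_sumr HL).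
  have -> : (fun pi => \sum_(k < n) \sum_(l < n | (k < l)%N)
      brt br (brt br c (b l)) (b k) pi) = fun _ => 0.
    by apply: functional_extensionality => pi; apply: Uop'.
  exact: (brt0r HL).
rewrite sum2_split eD addr0 in H; apply: etrans _ H; rewrite addrC.
by rewrite sum2_split.
Qed.
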